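(* Let $p\ne q$ be primes and let $T\colon\mathbb{Z}_p\times\mathbb{Z}_q^2\to\mathbb{N}$ be a multiset such that $\chi_{x+y}(T)=0$ for every nonzero $x\in\mathbb{Z}_p$ and every nonzero $y\in\mathbb{Z}_q^2$. For $i\in\mathbb{Z}_p$ define $g_i\colon\mathbb{Z}_q^2\to\mathbb{N}$ by $g_i(z)=T(i+z)$. Then $g_i-g_j$ is a constant function for all $i,j\in\mathbb{Z}_p$.
   Context: An element of $\mathbb{Z}_p\times\mathbb{Z}_q^2$ is written $x+y$ with $x\in\mathbb{Z}_p$, $y\in\mathbb{Z}_q^2$. For $w=x+y$ the character $\chi_w$ is $\chi_w(x'+y')=\exp\big(2\pi i(\tfrac{xx'}{p}+\tfrac{y\cdot y'}{q})\big)$, and for a multiset $T$, $\chi_w(T)=\sum_{z}T(z)\chi_w(z)$. *)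

(* Defs.v *)
From HB Require Import structures.
From mathcomp Require Import all_boot all_order all_algebra.
From mathcomp Require Import reals trigo.
From mathcomp Require Import complex.
Set Implicit Arguments. Unset Strict Implicit. Unset Printing Implicit Defensive.
Import Order.TTheory GRing.Theory Num.Theory.
Local Open Scope ring_scope.
Local Open Scope complex_scope.

(* The group Z_p x Z_q^2; an element (x, (y1, y2)) is written x + y in the paper. *)
Definition G (p q : nat) : finType := ('Z_p * ('Z_q * 'Z_q))%type.

Definition expi (R : realType) (t : R) : R[i] := (cos t +i* sin t).

Definition chi (R : realType) (p q : nat) (w z : G p q) : R[i] :=
  let x := (w.1 : nat) in let y1 := (w.2.1 : nat) in let y2 := (w.2.2 : nat) in
  let x' := (z.1 : nat) in let y1' := (z.2.1 : nat) in let y2' := (z.2.2 : nat) in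
  expi (2 * pi * ((x * x')%:R / p%:R + (y1 * y1' + y2 * y2')%:R / q%:R)).

Definition chiT (R : realType) (p q : nat) (w : G p q) (T : G p q -> nat) : R[i] :=
  \sum_(z : G p q) (T z)%:R * chi R w z.

Definition slice (p q : nat) (T : G p q -> nat) (i : 'Z_p) (z : 'Z_q * 'Z_q) : nat :=
  T (i, z).

(* Main.v *)
Require Import Defs.
From HB Require Import structures.
From mathcomp Require Import all_boot all_order all_algebra.
From mathcomp Require Import reals trigo complex.
From mathcomp Require Import zify lra.
Import Order.TTheory GRing.Theory Num.Theory.
Local Open Scope ring_scope.

Section Orthog.
Local Open Scope complex_scope.
Lemma dvd_ind (m i j : nat) : (i < m)%N -> (j < m)%N -> (m %| i + (m - j))%N = (i == j).
Proof.
move=> hi hj; apply/idP/eqP => [/dvdnP [c hc]|->].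
- case: c hc => [|[|c]] hc; rewrite ?mulSn in hc; lia.
- by rewrite subnKC ?dvdnn // ltnW.
Qed.
Section Orth.
Variable F : numFieldType.
Variable m : nat.
Variable w : F.
Hypothesis wm : w ^+ m.+1 = 1.
Hypothesis wk : forall k, (0 < k < m.+1)%N -> w ^+ k != 1.
Lemma orth k : \sum_(x < m.+1) w ^+ (x * k) = if (m.+1 %| k)%N then m.+1%:R else 0.
Proof.
case: ifP => hd.
- move/dvdnP: hd => [c ->].
  rewrite (eq_bigr (fun _ => 1)) ?sumr_const ?card_ord //.
  by move=> x _; rewrite mulnA mulnC exprM wm expr1n.
- have hu : w ^+ k = w ^+ (k %% m.+1).
    by rewrite {1}(divn_eq k m.+1) exprD mulnC exprM wm expr1n mul1r.
  have u1 : w ^+ k != 1.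
    rewrite hu; apply: wk; rewrite ltn_pmod // andbT lt0n.
    by apply/negP => /eqP h; move: hd; rewrite /dvdn h.
  have : (w ^+ k - 1) * \sum_(x < m.+1) w ^+ (x * k) = 0.
    rewrite (eq_bigr (fun x : 'I_m.+1 => (w ^+ k) ^+ x)); last first.
      by move=> x _; rewrite mulnC exprM.
    by rewrite -subrX1 -exprM mulnC exprM wm expr1n subrr.
  by move/eqP; rewrite mulf_eq0 subr_eq0 (negPf u1) /= => /eqP.
Qed.

Lemma inv1 (f : 'I_m.+1 -> F) :
  (forall x : 'I_m.+1, x != ord0 -> \sum_(i < m.+1) w ^+ (x * i) * f i = 0) ->
  forall j : 'I_m.+1, m.+1%:R * f j = \sum_i f i.
Proof.
move=> hf j.
pose S := \sum_(x < m.+1) w ^+ (x * (m.+1 - j)) * \sum_(i < m.+1) w ^+ (x * i) * f i.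
have e1 : S = \sum_i f i.
  rewrite /S (bigD1 ord0) //= [X in _ + X]big1 ?addr0; last by move=> x hx; rewrite hf ?mulr0.
  rewrite mul0n expr0 mul1r; apply: eq_bigr => i _; by rewrite ?mul0n ?expr0 mul1r.
have e2 : S = m.+1%:R * f j.
  rewrite /S (eq_bigr (fun x : 'I_m.+1 => \sum_(i < m.+1) w ^+ (x * (i + (m.+1 - j)))%N * f i)); last first.
    by move=> x _; rewrite mulr_sumr; apply: eq_bigr => i _; rewrite mulrA -exprD -mulnDr addnC.
  rewrite exchange_big /= (bigD1 j) //= [X in _ + X]big1 ?addr0.
    by rewrite -mulr_suml orth dvd_ind // eqxx mulrC.
  move=> i hi; rewrite -mulr_suml orth dvd_ind //.
  by move: hi; rewrite -val_eqE /= => /negPf ->; rewrite mul0r.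
by rewrite -e2 e1.
Qed.

Lemma sum_pair (b1 b2 : nat) :
  \sum_(y : 'I_m.+1 * 'I_m.+1) w ^+ (y.1 * b1 + y.2 * b2) =
  (\sum_(y1 < m.+1) w ^+ (y1 * b1)) * (\sum_(y2 < m.+1) w ^+ (y2 * b2)).
Proof.
rewrite -(pair_bigA _ (fun (y1 y2 : 'I_m.+1) => w ^+ (y1 * b1 + y2 * b2))) /= mulr_suml; apply: eq_bigr => y1 _.
by rewrite mulr_sumr; apply: eq_bigr => y2 _; rewrite exprD.
Qed.

Lemma inv2 (f : 'I_m.+1 * 'I_m.+1 -> F) :
  (forall y : 'I_m.+1 * 'I_m.+1, y != (ord0, ord0) ->
     \sum_(z : 'I_m.+1 * 'I_m.+1) w ^+ (y.1 * z.1 + y.2 * z.2)%N * f z = 0) ->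
  forall v : 'I_m.+1 * 'I_m.+1, m.+1%:R ^+ 2 * f v = \sum_z f z.
Proof.
move=> hf v.
pose S := \sum_(y : 'I_m.+1 * 'I_m.+1) w ^+ (y.1 * (m.+1 - v.1) + y.2 * (m.+1 - v.2)) *
   \sum_(z : 'I_m.+1 * 'I_m.+1) w ^+ (y.1 * z.1 + y.2 * z.2) * f z.
have e1 : S = \sum_z f z.
  rewrite /S (bigD1 (ord0, ord0)) //= [X in _ + X]big1 ?addr0; last by move=> x hx; rewrite hf ?mulr0.
  rewrite !mul0n expr0 mul1r; apply: eq_bigr => i _; by rewrite ?mul0n ?expr0 mul1r.
have e2 : S = m.+1%:R ^+ 2 * f v.
  rewrite /S (eq_bigr (fun y : 'I_m.+1 * 'I_m.+1 => \sum_(z : 'I_m.+1 * 'I_m.+1)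
     w ^+ (y.1 * (z.1 + (m.+1 - v.1)) + y.2 * (z.2 + (m.+1 - v.2)))%N * f z)); last first.
    move=> y _; rewrite mulr_sumr; apply: eq_bigr => z _; rewrite mulrA -exprD.
    by congr (w ^+ _ * _); rewrite !mulnDr; lia.
  rewrite exchange_big /= (bigD1 v) //= [X in _ + X]big1 ?addr0.
    by rewrite -mulr_suml sum_pair !orth !dvd_ind // !eqxx mulrC.
  move=> z hz; rewrite -mulr_suml sum_pair !orth !dvd_ind //.
  case: z hz => [z1 z2]; clear e1 S; case: v => [v1 v2] /=.
  move=> hz; case: eqP => h1; last by rewrite !mul0r.
  case: eqP => h2; last by rewrite mulr0 mul0r.
  by move: hz; rewrite (ord_inj h1) (ord_inj h2) eqxx.
by rewrite -e2 e1.
Qed.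
End Orth.

Section S.
Variable R : realType.
Lemma expiD (a b : R) : expi (a + b) = expi a * expi b.
Proof. by rewrite /expi cosD sinD; apply/eqP; rewrite eq_complex /= [cos a * sin b + _]addrC !eqxx. Qed.
Lemma expi0 : expi (0:R) = 1.
Proof. by rewrite /expi cos0 sin0. Qed.
Lemma expiMn (t : R) n : expi (n%:R * t) = expi t ^+ n.
Proof. elim: n => [|n IH]; first by rewrite mul0r expr0 expi0.
by rewrite -addn1 natrD mulrDl mul1r expiD IH exprD expr1. Qed.
Lemma expi2pi : expi (2 * pi : R) = 1.
Proof. by rewrite /expi mulr_natl cos2pi sin2pi. Qed.
Lemma expi_neq1 (t : R) : 0 < t < 2 * pi -> expi t != 1.
Proof.
move=> /andP[t0 t2]; apply/negP => /eqP [c1 s0].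
case: (ltrgtP t pi) => h.
- by have := sin_gt0_pi (x:=t); rewrite t0 h s0 ltxx => /(_ isT).
- have := sinDpi (t - pi); rewrite subrK s0 => /esym /eqP; rewrite oppr_eq0 => /eqP s1.
  have := sin_gt0_pi (x:=t - pi); rewrite s1 ltxx subr_gt0 h ltrBlDl /=.
  have tt : t < pi + pi by lra.
  by move/(_ tt).
- move: c1; rewrite h cospi => c1.
  have : (-1 : R) < 1 by lra.
  by rewrite c1 ltxx.
Qed.

Definition om (n : nat) : R[i] := expi (2 * pi / n%:R).

Lemma expi_frac a n : expi (2 * pi * (a%:R / n%:R)) = om n ^+ a.
Proof. by rewrite /om -expiMn mulrCA. Qed.

Lemma om_n n : (0 < n)%N -> om n ^+ n = 1.
Proof.
move=> n0; rewrite /om -expiMn mulrC divfK ?expi2pi //.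
by rewrite pnatr_eq0 -lt0n.
Qed.

Lemma om_k n k : (0 < k < n)%N -> om n ^+ k != 1.
Proof.
move=> /andP[k0 kn]; have n0 : (0 < n)%N by apply: leq_trans kn.
have pi0 : (0 : R) < 2 * pi by rewrite mulr_gt0 ?pi_gt0.
rewrite /om -expiMn; apply: expi_neq1; apply/andP; split.
  by rewrite mulr_gt0 ?divr_gt0 ?ltr0n.
rewrite mulrA ltr_pdivrMr ?ltr0n // mulrC ltr_pM2l //.
by rewrite ltr_nat.
Qed.
End S.
End Orthog.

Theorem proposition4p2 (R : realType) (p q : nat)
  (hp : prime p) (hq : prime q) (hpq : p <> q) (T : G p q -> nat)
  (hT : forall (x : 'Z_p) (y : 'Z_q * 'Z_q),
      x != 0 -> y != (0, 0) -> chiT R (x, y) T = 0) :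
  forall i j : 'Z_p, exists c : int,
    forall z : 'Z_q * 'Z_q, (slice T i z)%:Z - (slice T j z)%:Z = c.
Proof.
move=> i j.
have hpc : (Zp_trunc p).+2 = p := Zp_cast (prime_gt1 hp).
have hqc : (Zp_trunc q).+2 = q := Zp_cast (prime_gt1 hq).
have wp1 : om R p ^+ (Zp_trunc p).+2 = 1 by rewrite hpc om_n // prime_gt0.
have wpk : forall k, (0 < k < (Zp_trunc p).+2)%N -> om R p ^+ k != 1.
  by move=> k; rewrite hpc; apply: om_k.
have wq1 : om R q ^+ (Zp_trunc q).+2 = 1 by rewrite hqc om_n // prime_gt0.
have wqk : forall k, (0 < k < (Zp_trunc q).+2)%N -> om R q ^+ k != 1.
  by move=> k; rewrite hqc; apply: om_k.
have chiE : forall (x : 'Z_p) (y : 'Z_q * 'Z_q) (k : 'Z_p) (z : 'Z_q * 'Z_q),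
    chi R (x, y) (k, z) = om R p ^+ (x * k) * om R q ^+ (y.1 * z.1 + y.2 * z.2).
  by move=> x y k z; rewrite /chi /= mulrDr expiD !expi_frac.
pose H (y : 'Z_q * 'Z_q) (k : 'Z_p) : R[i] :=
  \sum_(z : 'Z_q * 'Z_q) (T (k, z))%:R * om R q ^+ (y.1 * z.1 + y.2 * z.2).
have chiTE : forall (x : 'Z_p) (y : 'Z_q * 'Z_q),
    chiT R (x, y) T = \sum_(k : 'Z_p) om R p ^+ (x * k) * H y k.
  move=> x y.
  transitivity (\sum_(k : 'Z_p) \sum_(z : 'Z_q * 'Z_q) (T (k, z))%:R * chi R (x, y) (k, z)).
    rewrite pair_bigA /=; apply: eq_bigr => -[k z] _ //.
  apply: eq_bigr => k _; rewrite /H mulr_sumr; apply: eq_bigr => z _.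
  by rewrite chiE mulrCA.
have step1 : forall y, y != (0, 0) -> forall k k', H y k = H y k'.
  move=> y hy.
  have := @inv1 _ _ _ wp1 wpk (H y).
  have hh : forall x : 'I_(Zp_trunc p).+2, x != ord0 ->
      \sum_(k < (Zp_trunc p).+2) om R p ^+ (x * k) * H y k = 0.
    by move=> x hx; rewrite -chiTE; apply: hT.
  move=> /(_ hh) e k k'.
  apply: (mulfI (x := ((Zp_trunc p).+2)%:R)); first by rewrite pnatr_eq0.
  by rewrite !e.
pose d (z : 'Z_q * 'Z_q) : R[i] := (T (i, z))%:R - (T (j, z))%:R.
have step2 : forall v, d v = d (0, 0).
  have := @inv2 _ _ _ wq1 wqk d.
  have hh : forall y : 'I_(Zp_trunc q).+2 * 'I_(Zp_trunc q).+2, y != (ord0, ord0) ->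
     \sum_(z : 'I_(Zp_trunc q).+2 * 'I_(Zp_trunc q).+2)
        om R q ^+ (y.1 * z.1 + y.2 * z.2)%N * d z = 0.
    move=> y hy.
    transitivity (H y i - H y j); last by rewrite (step1 y hy i j) subrr.
    rewrite /H -sumrB; apply: eq_bigr => z _.
    by rewrite /d mulrBr [_ * (T (i, z))%:R]mulrC [_ * (T (j, z))%:R]mulrC.
  move=> /(_ hh) e v.
  apply: (mulfI (x := ((Zp_trunc q).+2)%:R ^+ 2)); first by rewrite expf_eq0 pnatr_eq0.
  by rewrite !e.
exists ((T (i, (0, 0)))%:Z - (T (j, (0, 0)))%:Z) => z.
apply: (@intr_inj R[i]).
by rewrite !intrB; apply: step2.
Qed.
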